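(* Let $N\in\mathbb{N}$, $K\in\mathbb{N}$ with $K<N$, and let $h,p_1,\dots,p_T\in[0,1]$ satisfy $$h=\sum_{i=1}^T p_i\le \frac{K-\sqrt K}{N}.$$ Let $X_1,\dots,X_T$ be independent random variables with $X_i\sim\mathrm{Bin}(N,p_i)$. Then $$\mathbb{P}\Big(\bigvee_{i=1}^T (X_i>K)\Big)\le\left(\frac{eNh}{K}\right)^K e^{-Nh}.$$
   Context: $\mathrm{Bin}(n,p)$ denotes the binomial distribution with $n$ trials and success probability $p$. *)

(* Defs.v *)
From HB Require Import structures.
From mathcomp Require Import all_boot all_order all_algebra.
From mathcomp Require Import all_classical all_reals all_analysis.
Set Implicit Arguments. Unset Strict Implicit. Unset Printing Implicit Defensive.
Import Order.TTheory GRing.Theory Num.Theory.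
Local Open Scope classical_set_scope.
Local Open Scope ring_scope.

(* Mutual independence of a finite family (X_i)_{i < n} of random variables
   with values in a measurable space T': for every family of measurable sets
   (B_i), P(/\_i X_i \in B_i) = prod_i P(X_i \in B_i).  (Taking B_i = setT for
   i outside a subfamily J gives the product rule for every subfamily.) *)
Definition mutually_independent_RV d d' (Omega : measurableType d)
  (T' : measurableType d') (R : realType) (P : probability Omega R) (n : nat)
  (X : 'I_n -> {RV P >-> T'}) : Prop :=
  forall B : 'I_n -> set T', (forall i, measurable (B i)) ->
    P (\big[setI/setT]_(i < n) (X i @^-1` B i)) =
    (\prod_(i < n) P (X i @^-1` B i))%E.

(* Main.v *)
Require Import Defs.
From HB Require Import structures.
From mathcomp Require Import all_boot all_order all_algebra.
From mathcomp Require Import all_classical all_reals all_analysis.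
Import Order.TTheory GRing.Theory Num.Theory.
Local Open Scope classical_set_scope.
Local Open Scope ring_scope.
From mathcomp Require Import ring lra.
Lemma chern (R : realType) (N K : nat) (p : R) : 0 < p -> p <= 1 -> (0 < K)%N -> (0 < N)%N ->
  N%:R * p <= K%:R ->
  \sum_(k < N.+1) p ^+ k * (1 - p) ^+ (N - k) *+ 'C(N, k) * (K < k)%N%:R
  <= (expR 1 * (N%:R * p) / K%:R) ^+ K * expR (- (N%:R * p)).
Proof.
move=> p0 p1 K0 N0 NpK.
have Np0 : 0 < N%:R * p by rewrite mulr_gt0 // ltr0n.
have K0' : 0 < K%:R :> R by rewrite ltr0n.
set t := K%:R / (N%:R * p).
have t1 : 1 <= t by rewrite /t ler_pdivlMr // mul1r.
have t0 : 0 < t by lra.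
apply: (@le_trans _ _ (\sum_(k < N.+1) p ^+ k * (1 - p) ^+ (N - k) *+ 'C(N, k) * (t ^+ k / t ^+ K))).
  apply: ler_sum => k _.
  have tm : 0 <= p ^+ k * (1 - p) ^+ (N - k) *+ 'C(N, k).
    by rewrite mulrn_wge0 // mulr_ge0 // exprn_ge0 //; lra.
  apply: ler_wpM2l => //.
  case: ltnP => Kk.
    rewrite ler_pdivlMr ?exprn_gt0 // mul1r; apply: ler_weXn2l => //; exact: ltnW.
  by rewrite divr_ge0 // exprn_ge0 // ltW.
have -> : \sum_(k < N.+1) p ^+ k * (1 - p) ^+ (N - k) *+ 'C(N, k) * (t ^+ k / t ^+ K)
   = (1 - p + p * t) ^+ N / t ^+ K.
  rewrite exprDn mulr_suml; apply: eq_bigr => k _.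
  rewrite [(p * t) ^+ _]exprMn -[in LHS]mulr_natr -[in RHS]mulr_natr; ring.
apply: (@le_trans _ _ (expR (N%:R * (p * (t - 1))) / t ^+ K)).
  rewrite ler_pM2r ?invr_gt0 ?exprn_gt0 // expRM_natl.
  apply: lerXn2r; rewrite ?nnegrE ?expR_ge0 //; first nra.
  have := expR_ge1Dx (p * (t - 1)); lra.
have -> : N%:R * (p * (t - 1)) = K%:R - N%:R * p.
  have N0' : (N%:R : R) != 0 by rewrite pnatr_eq0 -lt0n.
  rewrite /t; field; rewrite N0' andbT; exact: lt0r_neq0.
rewrite expRD -[K%:R]mulr1 expRM_natl.
rewrite /t !expr_div_n !exprMn expr1n mulr1 le_eqVlt; apply/orP; left; apply/eqP.
have N0' : (N%:R : R) != 0 by rewrite pnatr_eq0 -lt0n.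
field; rewrite !expf_neq0 //; [exact: lt0r_neq0 | exact: lt0r_neq0].
Qed.
Lemma binom_tail (R : realType) (N K : nat) (p : R) : 0 <= p <= 1 -> (0 < K)%N -> (0 < N)%N ->
  N%:R * p <= K%:R ->
  (binomial_prob N p [set k | (K < k)%N] <=
    ((expR 1 * (N%:R * p) / K%:R) ^+ K * expR (- (N%:R * p)))%:E)%E.
Proof.
case/andP => p0 p1 K0 N0 NpK.
rewrite (@binomial_probE R N p p0 p1).
have -> : (\sum_(k < N.+1) ((@bin_prob R N p p0 p1 k)%:num%:E * \d_(nat_of_ord k) [set k | (K < k)%N]))%E
  = (\sum_(k < N.+1) p ^+ k * (1 - p) ^+ (N - k) *+ 'C(N, k) * (K < k)%N%:R)%:E.
  rewrite -sumEFin; apply: eq_bigr => k _; rewrite diracE /= -EFinM.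
  have -> : (nat_of_ord k \in [set k | (K < k)%N]) = (K < k)%N.
    by apply/idP/idP => [/set_mem|/mem_set].
  by [].
rewrite lee_fin.
have [->|pp] := eqVneq p 0.
  apply: (@le_trans _ _ 0).
    rewrite le_eqVlt; apply/orP; left; apply/eqP; apply: big1 => k _.
    by case: ltnP => Kk; rewrite ?mulr0 // expr0n gtn_eqF ?mul0r ?mul0rn ?mul0r //; exact: leq_trans Kk.
  by rewrite mulr_ge0 ?exprn_ge0 ?expR_ge0 // mulr0 mul0r.
apply: chern => //; rewrite lt_def pp p0 //.
Qed.
Lemma gsup (R : realType) (K : nat) (mu M : R) : (0 < K)%N -> 0 <= mu -> mu <= M -> 0 < M ->
  M <= K%:R - 1 ->
  (expR 1 * mu / K%:R) ^+ K * expR (- mu) * M <= mu * ((expR 1 * M / K%:R) ^+ K * expR (- M)).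
Proof.
case: K => // K _ mu0 muM M0 MK.
have K1 : M <= K%:R by move: MK; rewrite -addn1 natrD; lra.
have key : mu ^+ K * expR (- mu) <= M ^+ K * expR (- M).
  have h1 : mu <= M * expR ((mu - M) / M).
    have := expR_ge1Dx ((mu - M) / M).
    have -> : 1 + (mu - M) / M = mu / M by field; exact: lt0r_neq0.
    by move=> h; rewrite mulrC -ler_pdivrMr.
  have h2 : mu ^+ K <= M ^+ K * expR (K%:R * ((mu - M) / M)).
    rewrite expRM_natl -exprMn; apply: lerXn2r => //; rewrite nnegrE // mulr_ge0 ?expR_ge0 //; lra.
  have h3 : K%:R * ((mu - M) / M) <= mu - M.
    rewrite mulrA ler_pdivrMr //; nra.
  apply: (@le_trans _ _ (M ^+ K * expR (K%:R * ((mu - M) / M)) * expR (- mu))).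
    by apply: ler_wpM2r => //; rewrite expR_ge0.
  rewrite -mulrA -expRD; apply: ler_wpM2l; first by rewrite exprn_ge0 // ltW.
  rewrite ler_expR; lra.
pose a : R := expR 1 / K.+1%:R.
have a0 : 0 <= a by rewrite divr_ge0 ?expR_ge0.
have -> : expR 1 * mu / K.+1%:R = a * mu by rewrite /a mulrAC.
have -> : expR 1 * M / K.+1%:R = a * M by rewrite /a mulrAC.
have -> : (a * mu) ^+ K.+1 * expR (- mu) * M = (a * a ^+ K * mu * M) * (mu ^+ K * expR (- mu)).
  by rewrite exprMn [a ^+ K.+1]exprS [mu ^+ K.+1]exprS; ring.
have -> : mu * ((a * M) ^+ K.+1 * expR (- M)) = (a * a ^+ K * mu * M) * (M ^+ K * expR (- M)).
  by rewrite exprMn [a ^+ K.+1]exprS [M ^+ K.+1]exprS; ring.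
apply: ler_wpM2l => //; rewrite !mulr_ge0 // ?exprn_ge0 //; lra.
Qed.
Lemma union_bound d (Omega : measurableType d) (R : realType) (P : probability Omega R)
  (n : nat) (F : 'I_n -> set Omega) : (forall i, measurable (F i)) ->
  (P (\big[setU/set0]_(i < n) F i) <= \sum_(i < n) P (F i))%E.
Proof.
elim: n F => [|n IH] F mF; first by rewrite !big_ord0 measure0.
rewrite !big_ord_recr /=.
apply: le_trans (measureU2 _ _ _) _.
- by apply: bigsetU_measurable => i _; exact: mF.
- exact: mF.
by apply: leeD => //; apply: IH => i.
Qed.
Lemma nat_meas (A : set nat) : measurable A.
Proof. done. Qed.

Theorem lemma10 (R : realType) (d : measure_display) (Omega : measurableType d)
  (P : probability Omega R) (N K T : nat) (h : R) (p : 'I_T -> R)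
  (X : 'I_T -> {RV P >-> nat}) :
  (K < N)%N ->
  0 <= h <= 1 ->
  (forall i, 0 <= p i <= 1) ->
  h = \sum_(i < T) p i ->
  h <= (K%:R - Num.sqrt K%:R) / N%:R ->
  mutually_independent_RV X ->
  (forall i, distribution P (X i) = binomial_prob N (p i)) ->
  (P (\big[setU/set0]_(i < T) (X i @^-1` [set k | (K < k)%N]))
   <= ((expR 1 * N%:R * h / K%:R) ^+ K * expR (- (N%:R * h)))%:E)%E.
Proof.
move=> KN /andP[h0 h1] p01 hsum hle _ hX.
have N0 : (0 < N)%N := leq_ltn_trans (leq0n K) KN.
have NR : 0 < N%:R :> R by rewrite ltr0n.
have p0 i : 0 <= p i by case/andP: (p01 i).
have ph i : p i <= h.
  by rewrite hsum (bigD1 i) //= lerDl sumr_ge0.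
have Nh : N%:R * h <= K%:R - Num.sqrt K%:R.
  by rewrite mulrC -ler_pdivlMr.
have mA i : measurable (X i @^-1` [set k | (K < k)%N]).
  exact: measurable_funPTI.
case: K KN hle Nh mA => [|K] KN hle Nh mA.
  have Nh0 : N%:R * h = 0.
    move: Nh; rewrite sqrtr0 subr0 => Nh.
    apply/eqP; rewrite eq_le Nh mulr_ge0 // ltW //.
  rewrite expr0 mul1r Nh0 oppr0 expR0.
  apply: probability_le1.
  by apply: bigsetU_measurable => i _.
have sK : 1 <= Num.sqrt K.+1%:R :> R.
  by rewrite -[X in X <= _]sqrtr1 ler_sqrt ?ler1n.
have NhK : N%:R * h <= K.+1%:R - 1 by lra.
pose g (x : R) := (expR 1 * x / K.+1%:R) ^+ K.+1 * expR (- x).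
apply: le_trans (@union_bound _ _ _ P _ _ mA) _.
apply: (@le_trans _ _ (\sum_(i < T) (g (N%:R * p i))%:E)%E).
  apply: lee_sum => i _.
  have -> : P (X i @^-1` [set k | (K.+1 < k)%N]) = distribution P (X i) [set k | (K.+1 < k)%N] by [].
  rewrite hX; apply: binom_tail => //.
  have : N%:R * p i <= N%:R * h by rewrite ler_pM2l.
  lra.
rewrite sumEFin lee_fin -mulrA.
have [h00|hpos] := eqVneq h 0.
  have pz i : p i = 0 by apply/eqP; rewrite eq_le p0 andbT -h00.
  have g0 : g 0 = 0 by rewrite /g mulr0 mul0r expr0n mul0r.
  rewrite big1 ?h00 ?mulr0 ?g0 // => i _; by rewrite pz mulr0.
have M0 : 0 < N%:R * h by rewrite mulr_gt0 // lt_def hpos h0.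
apply: (@le_trans _ _ (\sum_(i < T) (N%:R * p i) * g (N%:R * h) / (N%:R * h))).
  apply: ler_sum => i _.
  rewrite ler_pdivlMr //; apply: gsup => //.
  - by rewrite mulr_ge0 // ltW.
  - by rewrite ler_pM2l.
rewrite -mulr_suml -mulr_suml -mulr_sumr -hsum.
rewrite le_eqVlt; apply/orP; left; apply/eqP.
rewrite /g.
have -> : expR 1 * N%:R * (h / K.+1%:R) = expR 1 * (N%:R * h) / K.+1%:R by rewrite !mulrA.
by rewrite mulrAC mulfV ?mul1r // lt0r_neq0.
Qed.
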